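(* In the periodic lock scheduling problem, there exists a schedule $\sigma$ such that $C_{\mathrm{avg},\sigma}$ is well-defined (the limit exists) and finite.
   Context: Periodic lock scheduling problem. Time is discrete, periods $t=1,2,\dots$. There are $k$ vessel streams; stream $i$ has a direction $\delta_i\in\{D,U\}$, an integer periodicity $\lambda_i\ge1$ and an integer offset $1\le\mu_i\le\lambda_i$; $a_i(t)=1$ if $t\equiv\mu_i\pmod{\lambda_i}$ and $0$ otherwise, $a_\delta(t)=\sum_{i:\delta_i=\delta}a_i(t)$. A schedule is a sequence $\sigma=(\sigma(t))_{t\ge1}$ with $\sigma(t)\in\{D,U,W\}$ ($D$: process downstream waiting vessels and switch alignment to upstream; $U$ symmetrically; $W$: wait); it is feasible if the non-$W$ actions alternate between $D$ and $U$. Queue lengths: $n_D(0)=n_U(0)=0$ and for $t\ge1$, $n_\delta(t)=0$ if $\sigma(t)=\delta$ and $n_\delta(t)=n_\delta(t-1)+a_\delta(t)$ otherwise. $C_\sigma(t)=n_D(t)+n_U(t)$ and $C_{\mathrm{avg},\sigma}=\lim_{T\to\infty}\frac1T\sum_{t=1}^TC_\sigma(t)$. *)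

(* Defs.v *)
From Stdlib Require Import Reals Lra Lia Arith List.
Open Scope R_scope.

(* Directions D (downstream) and U (upstream). *)
Inductive dir : Set := Dn | Up.

Inductive action : Set := AD | AU | AW.

Definition dir_eqb (d e : dir) : bool :=
  match d, e with Dn, Dn | Up, Up => true | _, _ => false end.

Definition act_of (d : dir) : action := match d with Dn => AD | Up => AU end.

Record stream : Set := mkStream { sdir : dir; lam : nat; mu : nat }.

Definition valid_stream (s : stream) : Prop :=
  (1 <= lam s)%nat /\ (1 <= mu s)%nat /\ (mu s <= lam s)%nat.

Definition arrival (s : stream) (t : nat) : nat :=
  if Nat.eqb (t mod lam s) (mu s mod lam s) then 1%nat else 0%nat.

Definition arr (ss : list stream) (d : dir) (t : nat) : nat :=
  list_sum (map (fun s => arrival s t) (filter (fun s => dir_eqb d (sdir s)) ss)).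

(* A schedule: sigma(t) for t >= 1 (sigma 0 is irrelevant). *)
Definition schedule := nat -> action.

Definition feasible (sigma : schedule) : Prop :=
  forall t1 t2 : nat, (1 <= t1)%nat -> (t1 < t2)%nat ->
    sigma t1 <> AW -> sigma t2 <> AW ->
    (forall t, (t1 < t)%nat -> (t < t2)%nat -> sigma t = AW) ->
    sigma t1 <> sigma t2.

Fixpoint queue (ss : list stream) (sigma : schedule) (d : dir) (t : nat) : nat :=
  match t with
  | O => O
  | S t' => if match sigma (S t'), act_of d with
               | AD, AD | AU, AU | AW, AW => true | _, _ => false end
            then O
            else (queue ss sigma d t' + arr ss d (S t'))%nat
  end.

Definition cost (ss : list stream) (sigma : schedule) (t : nat) : nat :=
  (queue ss sigma Dn t + queue ss sigma Up t)%nat.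

Fixpoint cum_cost (ss : list stream) (sigma : schedule) (T : nat) : R :=
  match T with
  | O => 0
  | S T' => cum_cost ss sigma T' + INR (cost ss sigma (S T'))
  end.

(* (1/T) sum_{t=1}^T C_sigma(t); the value at T = 0 is irrelevant for the limit. *)
Definition avg_cost_seq (ss : list stream) (sigma : schedule) (T : nat) : R :=
  cum_cost ss sigma T / INR T.

(* Main.v *)
Require Import Defs.
From Stdlib Require Import Reals List.
From Stdlib Require Import Lra Lia Arith.
Open Scope R_scope.

Definition alt : schedule := fun t => if Nat.odd t then AD else AU.

Lemma alt_feasible : feasible alt.
Proof.
  intros t1 t2 H1 H12 _ _ Hmid.
  assert (t2 = S t1).
  { destruct (Nat.eq_dec t2 (S t1)) as [|Hn]; auto.
    exfalso. specialize (Hmid (S t1) ltac:(lia) ltac:(lia)).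
    unfold alt in Hmid. destruct (Nat.odd (S t1)); discriminate. }
  subst t2. unfold alt. rewrite Nat.odd_succ, <- Nat.negb_even.
  destruct (Nat.even t1); simpl; discriminate.
Qed.

Lemma queue_alt ss : forall t, (1 <= t)%nat ->
  queue ss alt Dn t = (if Nat.odd t then 0 else arr ss Dn t)%nat /\
  queue ss alt Up t = (if Nat.odd t then arr ss Up t else 0)%nat.
Proof.
  induction t as [|t IH]; intros Ht; [lia|].
  assert (Hq : queue ss alt Dn t = (if Nat.odd t then 0 else arr ss Dn t)%nat /\
             queue ss alt Up t = (if Nat.odd t then arr ss Up t else 0)%nat \/ t = 0%nat).
  { destruct t; [right; reflexivity|left; apply IH; lia]. }
  simpl queue. unfold alt at 1 3.
  assert (Ho : Nat.odd (S t) = negb (Nat.odd t)).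
  { rewrite Nat.odd_succ, <- Nat.negb_odd. reflexivity. }
  rewrite Ho.
  destruct Hq as [[HD HU]|H0].
  - rewrite HD, HU. destruct (Nat.odd t); simpl; split; reflexivity.
  - subst t. simpl. split; reflexivity.
Qed.

Lemma arr_periodic ss P : Forall (fun s => lam s <> 0%nat /\ Nat.divide (lam s) P) ss ->
  forall d t, arr ss d (t + P) = arr ss d t.
Proof.
  intros HF d t. unfold arr. induction HF as [|s ss' [Hl [k Hk]] HF IH]; simpl; auto.
  destruct (dir_eqb d (sdir s)); simpl; auto.
  rewrite IH. f_equal. unfold arrival. rewrite Hk. rewrite Nat.Div0.mod_add. reflexivity.
Qed.

Lemma exP ss : Forall valid_stream ss -> exists k, (0 < k)%nat /\
  Forall (fun s => lam s <> 0%nat /\ Nat.divide (lam s) (2 * k)) ss.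
Proof.
  induction 1 as [|s ss' Hs HF [k [Hk IH]]].
  - exists 1%nat. split; auto.
  - exists (lam s * k)%nat. destruct Hs as [Hl _]. split; [nia|].
    constructor.
    + split; [lia|]. exists (2 * k)%nat. lia.
    + eapply Forall_impl; [|exact IH]. intros a [Ha [m Hm]]. split; auto.
      exists (lam s * m)%nat. rewrite Nat.mul_assoc, (Nat.mul_comm 2 (lam s)), <- Nat.mul_assoc, Hm. lia.
Qed.

Section Avg.
Variable c : nat -> nat.
Variable P : nat.
Hypothesis HP : (0 < P)%nat.
Hypothesis Hper : forall t, (1 <= t)%nat -> c (t + P) = c t.

Fixpoint cs (T : nat) : R := match T with O => 0 | S T' => cs T' + INR (c (S T')) end.

Lemma cs_add T : cs (T + P) = cs T + cs P.
Proof.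
  induction T; simpl. lra.
  rewrite IHT. replace (S (T + P)) with (S T + P)%nat by lia. rewrite Hper by lia. lra.
Qed.

Lemma cs_qr q r : cs (q * P + r) = INR q * cs P + cs r.
Proof.
  induction q; simpl. lra.
  replace (P + q * P + r)%nat with ((q * P + r) + P)%nat by lia.
  rewrite cs_add, IHq. destruct q; simpl; lra.
Qed.

Lemma cs_mono a b : (a <= b)%nat -> cs a <= cs b.
Proof.
  induction 1. lra. simpl. pose proof (pos_INR (c (S m))). lra.
Qed.

Lemma cs_nonneg a : 0 <= cs a.
Proof. apply (cs_mono 0). lia. Qed.

Lemma cs_cv : Un_cv (fun T => cs T / INR T) (cs P / INR P).
Proof.
  set (Sm := cs P).
  assert (HS : 0 <= Sm) by apply cs_nonneg.
  assert (HPr : 0 < INR P) by (apply lt_0_INR; lia).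
  intros eps Heps.
  destruct (INR_unbounded (Sm / eps)) as [N HN].
  exists (S N). intros T HT. unfold Rgt, ge in *. unfold R_dist.
  assert (HTr : INR (S N) <= INR T) by (apply le_INR; lia).
  rewrite S_INR in HTr.
  assert (HT0 : 0 < INR T) by (pose proof (pos_INR N); lra).
  pose proof (Nat.div_mod T P ltac:(lia)) as Hd.
  pose proof (Nat.mod_upper_bound T P ltac:(lia)) as Hr.
  set (q := (T / P)%nat) in *. set (r := (T mod P)%nat) in *.
  assert (Hcs : cs T = INR q * Sm + cs r).
  { rewrite Hd, Nat.mul_comm. apply cs_qr. }
  assert (HTe : INR T = INR q * INR P + INR r).
  { rewrite Hd at 1. rewrite plus_INR, mult_INR. lra. }
  assert (Hr0 : 0 <= cs r <= Sm) by (split; [apply cs_nonneg|apply cs_mono; lia]).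
  assert (Hrr : 0 <= INR r <= INR P) by (split; [apply pos_INR|apply le_INR; lia]).
  assert (Heq : cs T / INR T - Sm / INR P = (INR P * cs r - INR r * Sm) / (INR T * INR P)).
  { rewrite Hcs. field_simplify; [|lra|lra]. rewrite HTe. field. lra. }
  rewrite Heq.
  assert (Hb : Rabs (INR P * cs r - INR r * Sm) <= INR P * Sm).
  { apply Rabs_le. split; nra. }
  unfold Rdiv at 1. rewrite Rabs_mult, Rabs_inv. rewrite (Rabs_right (INR T * INR P)) by nra. fold (Rdiv (Rabs (INR P * cs r - INR r * Sm)) (INR T * INR P)).
  apply Rle_lt_trans with (INR P * Sm / (INR T * INR P)).
  { unfold Rdiv. apply Rmult_le_compat_r; [|exact Hb].
    left. apply Rinv_0_lt_compat. nra. }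
  replace (INR P * Sm / (INR T * INR P)) with (Sm / INR T) by (field; lra).
  apply Rmult_lt_reg_r with (INR T); auto.
  replace (Sm / INR T * INR T) with Sm by (field; lra).
  assert (Sm / eps * eps = Sm) by (field; lra).
  nra.
Qed.
End Avg.

Theorem lemma4 (ss : list stream) (Hvalid : Forall valid_stream ss) :
  exists sigma : schedule, feasible sigma /\
    exists L : R, Un_cv (avg_cost_seq ss sigma) L.
Proof.
  exists alt. split; [apply alt_feasible|].
  destruct (exP ss Hvalid) as [k [Hk HF]].
  set (P := (2 * k)%nat) in *.
  assert (Hper : forall t, (1 <= t)%nat -> cost ss alt (t + P) = cost ss alt t).
  { intros t Ht. unfold cost.
    destruct (queue_alt ss t Ht) as [A B].
    destruct (queue_alt ss (t + P) ltac:(lia)) as [A' B'].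
    rewrite A, B, A', B'.
    assert (Nat.odd (t + P) = Nat.odd t).
    { unfold P. rewrite Nat.odd_add, Nat.odd_mul. simpl. destruct (Nat.odd t); reflexivity. }
    rewrite H, !(arr_periodic ss P HF). reflexivity. }
  exists (cs (cost ss alt) P / INR P).
  assert (Heq : forall T, avg_cost_seq ss alt T = cs (cost ss alt) T / INR T).
  { intros T. unfold avg_cost_seq. f_equal. induction T; simpl; auto. rewrite IHT. reflexivity. }
  intros eps He. destruct (cs_cv (cost ss alt) P ltac:(unfold P; lia) Hper eps He) as [N HN].
  exists N. intros n Hn. rewrite Heq. apply HN; auto.
Qed.
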